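(* Let $S$ be an intra-regular semigroup and $A=(\mu_A,\nu_A)$ an IF subset of $S$. Then $A$ is an IF ideal of $S$ if and only if $\underline{A}$ is a semiprime ideal of the semigroup $(\underline{S},\circ)$.
   Context: A semigroup $S$ is intra-regular if for every $x\in S$ there are $a,b\in S$ with $x=ax^2b$. An intuitionistic fuzzy (IF) subset of $S$ is a pair $A=(\mu_A,\nu_A)$ of functions $S\to[0,1]$ with $\mu_A(x)+\nu_A(x)\le1$ for all $x$. $A$ is an IF ideal of $S$ if $\mu_A(xy)\ge\max\{\mu_A(x),\mu_A(y)\}$ and $\nu_A(xy)\le\min\{\nu_A(x),\nu_A(y)\}$ for all $x,y\in S$. For $x\in S$ and $\alpha,\beta\in[0,1]$ with $\alpha+\beta\le1$, the IF point $x_{(\alpha,\beta)}$ is the IF subset of $S$ with value $(\alpha,\beta)$ at $x$ and $(0,1)$ elsewhere (so all points $x_{(0,1)}$ coincide). $\underline{S}$ is the set of all IF points of $S$; it is a semigroup under $x_{(\alpha,\beta)}\circ y_{(\gamma,\delta)}=(xy)_{(\min(\alpha,\gamma),\max(\beta,\delta))}$. For an IF subset $A$, $\underline{A}=\{x_{(\alpha,\beta)}\in\underline{S}:\mu_A(x)\ge\alpha,\ \nu_A(x)\le\beta\}$. In a semigroup $T$, an ideal is a non-empty $I\subseteq T$ with $TI\subseteq I$ and $IT\subseteq I$; here a semiprime ideal of $T$ means an ideal $I$ such that for every $t\in T$, $t^2\in I$ implies $t\in I$. *)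

(* Defs.v *)
From Stdlib Require Import Reals Classical ClassicalEpsilon FunctionalExtensionality.
Open Scope R_scope.

Definition IFset (S : Type) : Type := ((S -> R) * (S -> R))%type.

Definition is_IF_subset {S : Type} (A : IFset S) : Prop :=
  forall x, 0 <= fst A x <= 1 /\ 0 <= snd A x <= 1 /\ fst A x + snd A x <= 1.

Definition is_IF_ideal {S : Type} (mul : S -> S -> S) (A : IFset S) : Prop :=
  forall x y, fst A (mul x y) >= Rmax (fst A x) (fst A y) /\
              snd A (mul x y) <= Rmin (snd A x) (snd A y).

Definition intra_regular {S : Type} (mul : S -> S -> S) : Prop :=
  forall x, exists a b, x = mul (mul a (mul x x)) b.

Definition adm (a b : R) : Prop := 0 <= a <= 1 /\ 0 <= b <= 1 /\ a + b <= 1.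

Definition ifpt {S : Type} (x : S) (a b : R) : IFset S :=
  (fun z => if excluded_middle_informative (z = x) then a else 0,
   fun z => if excluded_middle_informative (z = x) then b else 1).

Definition IFpoints (S : Type) : IFset S -> Prop :=
  fun P => exists x a b, adm a b /\ P = ifpt x a b.

Definition underline {S : Type} (A : IFset S) : IFset S -> Prop :=
  fun P => exists x a b, adm a b /\ P = ifpt x a b /\ fst A x >= a /\ snd A x <= b.

(* The product on S_:  x_(a,b) o y_(c,d) = (xy)_(min(a,c), max(b,d)).
   Ideal of (S_, o): non-empty subset I of S_ with S_ o I ⊆ I and I o S_ ⊆ I. *)
Definition is_ideal_points {S : Type} (mul : S -> S -> S) (I : IFset S -> Prop) : Prop :=
  (forall P, I P -> IFpoints S P) /\
  (exists P, I P) /\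
  (forall x a b y c d, adm a b -> adm c d ->
     I (ifpt y c d) -> I (ifpt (mul x y) (Rmin a c) (Rmax b d))) /\
  (forall x a b y c d, adm a b -> adm c d ->
     I (ifpt x a b) -> I (ifpt (mul x y) (Rmin a c) (Rmax b d))).

Definition is_semiprime_ideal_points {S : Type} (mul : S -> S -> S) (I : IFset S -> Prop) : Prop :=
  is_ideal_points mul I /\
  (forall x a b, adm a b ->
     I (ifpt (mul x x) (Rmin a a) (Rmax b b)) -> I (ifpt x a b)).

(* Main.v *)
Require Import Defs.
From Stdlib Require Import Reals Lra ClassicalEpsilon.
Open Scope R_scope.

Lemma adm_minmax a b c d : adm a b -> adm c d -> adm (Rmin a c) (Rmax b d).
Proof.
  unfold adm; intros H1 H2.
  unfold Rmin, Rmax; destruct (Rle_dec a c); destruct (Rle_dec b d); lra.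
Qed.

Lemma under_iff {S : Type} (A : IFset S) (hA : is_IF_subset A) y c d :
  adm c d -> (underline A (ifpt y c d) <-> fst A y >= c /\ snd A y <= d).
Proof.
  intros Hcd; split.
  - intros [x [a [b [Hab [E [H1 H2]]]]]].
    assert (E1 := f_equal (fun P => fst P y) E).
    assert (E2 := f_equal (fun P => snd P y) E).
    unfold ifpt in E1, E2; simpl in E1, E2.
    destruct (excluded_middle_informative (y = y)) as [_|n]; [|congruence].
    destruct (excluded_middle_informative (y = x)) as [->|n].
    + subst; split; assumption.
    + subst. destruct (hA y) as [[? ?] [[? ?] ?]]. lra.
  - intros [H1 H2]. exists y, c, d. repeat split; auto; apply Hcd.
Qed.

Theorem theorem3p19 (S : Type) (mul : S -> S -> S)
  (assoc : forall x y z, mul x (mul y z) = mul (mul x y) z)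
  (hne : inhabited S) (hS : intra_regular mul) (A : IFset S) (hA : is_IF_subset A) :
  is_IF_ideal mul A <-> is_semiprime_ideal_points mul (underline A).
Proof.
  split.
  - intros HI. split; [split; [|split; [|split]]|].
    + intros P [x [a [b [Hab [E _]]]]]. exists x, a, b. auto.
    + destruct hne as [s]. exists (ifpt s 0 1). apply under_iff; auto.
      unfold adm; lra. destruct (hA s) as [? [? ?]]; lra.
    + intros x a b y c d Hab Hcd Hy.
      apply under_iff in Hy; auto. apply under_iff; auto using adm_minmax.
      destruct (HI x y) as [H1 H2].
      pose proof (Rmax_r (fst A x) (fst A y)); pose proof (Rmin_r (snd A x) (snd A y)).
      pose proof (Rmin_r a c); pose proof (Rmax_r b d). lra.
    + intros x a b y c d Hab Hcd Hy.
      apply under_iff in Hy; auto. apply under_iff; auto using adm_minmax.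
      destruct (HI x y) as [H1 H2].
      pose proof (Rmax_l (fst A x) (fst A y)); pose proof (Rmin_l (snd A x) (snd A y)).
      pose proof (Rmin_l a c); pose proof (Rmax_l b d). lra.
    + intros x a b Hab H. apply under_iff in H; auto using adm_minmax.
      apply under_iff; auto. rewrite Rmin_left, Rmax_left in H by lra.
      destruct (hS x) as [p [q Ex]].
      destruct (HI (mul p (mul x x)) q) as [H1 H2].
      destruct (HI p (mul x x)) as [H3 H4].
      rewrite <- Ex in H1, H2.
      pose proof (Rmax_l (fst A (mul p (mul x x))) (fst A q)).
      pose proof (Rmin_l (snd A (mul p (mul x x))) (snd A q)).
      pose proof (Rmax_r (fst A p) (fst A (mul x x))).
      pose proof (Rmin_r (snd A p) (snd A (mul x x))).
      lra.
  - intros [[_ [_ [HL HR]]] _] x y.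
    assert (Ha10 : adm 1 0) by (unfold adm; lra).
    assert (Hx : adm (fst A x) (snd A x)) by (destruct (hA x) as [? [? ?]]; unfold adm; lra).
    assert (Hy : adm (fst A y) (snd A y)) by (destruct (hA y) as [? [? ?]]; unfold adm; lra).
    assert (R1 := HL x 1 0 y _ _ Ha10 Hy (proj2 (under_iff A hA y _ _ Hy) (conj (Rge_refl _) (Rle_refl _)))).
    assert (R2 := HR x _ _ y 1 0 Hx Ha10 (proj2 (under_iff A hA x _ _ Hx) (conj (Rge_refl _) (Rle_refl _)))).
    apply under_iff in R1; auto using adm_minmax.
    apply under_iff in R2; auto using adm_minmax.
    destruct Hx as [? [? ?]]; destruct Hy as [? [? ?]].
    rewrite Rmin_right, Rmax_right in R1 by lra.
    rewrite Rmin_left, Rmax_left in R2 by lra.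
    split.
    + apply Rle_ge, Rmax_lub; lra.
    + apply Rmin_glb; lra.
Qed.
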